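(* Assume A2, let $x\in\mathcal I$ and suppose the $x$-threshold word $\pi$ exists. Then (1) if $00$ occurs as a factor of $\pi$, then $\pi=L_n(w)$ for some word $w$ and some $n\ge1$; (2) if $11$ occurs as a factor of $\pi$, then $\pi=R_n(w)$ for some word $w$ and some $n\ge1$.
   Context: Words are finite strings over $\{0,1\}$; $w^\omega$ is the infinite repetition of $w$. Let $\mathcal I\subseteq\mathbb R$ be an interval and $\phi_0,\phi_1:\mathcal I\to\mathcal I$. For a word $w$ put $\phi_w:=\phi_{w_{|w|}}\circ\cdots\circ\phi_{w_1}$ (first letter applied first), $\phi_\epsilon=\mathrm{id}$. Assumption A2: for all $x<y$ in $\mathcal I$ and $k\in\{0,1\}$, $\phi_k(x)<\phi_k(y)$ and $\phi_k(y)-\phi_k(x)<y-x$; moreover $\phi_0,\phi_1$ have fixed points $y_0,y_1\in\mathcal I$ with $y_1<y_0$. The $x$-threshold orbit is the sequence $(x_k)_{k\ge1}$ with $x_1=\phi_1(x)$ and $x_{k+1}=\phi_1(x_k)$ if $x_k\ge x$, $x_{k+1}=\phi_0(x_k)$ if $x_k<x$. The $x$-threshold word is the shortest non-empty finite word $\pi$ such that $x_{k+1}=\phi_{(\pi^\omega)_k}(x_k)$ for all $k\ge1$, when such a word exists. For $p\ge1$, $L_p$ and $R_p$ are the word morphisms (substitutions) determined by $L_p(0)=0^{p+1}1$, $L_p(1)=0^p1$, $R_p(0)=01^p$, $R_p(1)=01^{p+1}$, extended to words by concatenation. *)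

(* Defs.v *)
(* real numbers from Stdlib Reals, words as lists of bool
   (letter 0 = false, letter 1 = true). *)
From Stdlib Require Import Reals List.
Import ListNotations.
Open Scope R_scope.

Definition word := list bool.

Definition phi_of (phi0 phi1 : R -> R) (k : bool) : R -> R :=
  if k then phi1 else phi0.

Definition is_interval (I : R -> Prop) : Prop :=
  forall a b c, I a -> I c -> a <= b -> b <= c -> I b.

(* Assumption A2 (plus phi_k : I -> I). *)
Definition A2 (I : R -> Prop) (phi0 phi1 : R -> R) : Prop :=
  (forall k z, I z -> I (phi_of phi0 phi1 k z)) /\
  (forall k u v, I u -> I v -> u < v ->
     phi_of phi0 phi1 k u < phi_of phi0 phi1 k v /\
     phi_of phi0 phi1 k v - phi_of phi0 phi1 k u < v - u) /\
  (exists y0 y1, I y0 /\ I y1 /\ phi0 y0 = y0 /\ phi1 y1 = y1 /\ y1 < y0).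

(* x-threshold orbit, shifted: orbit n = x_(n+1), for n : nat. *)
Fixpoint orbit (phi0 phi1 : R -> R) (x : R) (n : nat) : R :=
  match n with
  | O => phi1 x
  | S m => let z := orbit phi0 phi1 x m in
           if Rle_dec x z then phi1 z else phi0 z
  end.

(* (pi^omega)_k for k >= 1 (1-indexed), pi non-empty. *)
Definition omega_letter (pi : word) (k : nat) : bool :=
  nth (Nat.modulo (k - 1) (length pi)) pi false.

Definition generates (phi0 phi1 : R -> R) (x : R) (pi : word) : Prop :=
  forall k : nat, (1 <= k)%nat ->
    orbit phi0 phi1 x k = phi_of phi0 phi1 (omega_letter pi k) (orbit phi0 phi1 x (k - 1)).

Definition is_threshold_word (phi0 phi1 : R -> R) (x : R) (pi : word) : Prop :=
  pi <> [] /\ generates phi0 phi1 x pi /\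
  (forall pi', pi' <> [] -> generates phi0 phi1 x pi' -> (length pi <= length pi')%nat).

Definition factor (u w : word) : Prop := exists a b, w = a ++ u ++ b.

Definition L_img (p : nat) (c : bool) : word :=
  if c then repeat false p ++ [true] else repeat false (S p) ++ [true].
Definition R_img (p : nat) (c : bool) : word :=
  if c then false :: repeat true (S p) else false :: repeat true p.
Definition Lmorph (p : nat) (w : word) : word := flat_map (L_img p) w.
Definition Rmorph (p : nat) (w : word) : word := flat_map (R_img p) w.

(* Main.v *)
Require Import Defs.
From Stdlib Require Import Reals List Lra Lia Arith Classical.
Import ListNotations.
Open Scope R_scope.

Definition contr (I : R -> Prop) (f : R -> R) : Prop :=
  forall u v, I u -> I v -> u < v -> f u < f v /\ f v - f u < v - u.

Lemma c_lt I f u v : contr I f -> I u -> I v -> u < v -> f u < f v.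
Proof. intros H Iu Iv Huv; apply (H u v Iu Iv Huv). Qed.

Lemma c_le I f u v : contr I f -> I u -> I v -> u <= v -> f u <= f v.
Proof. intros H Iu Iv Huv. destruct (Rle_lt_or_eq_dec _ _ Huv) as [h|h].
  - left; apply (H u v Iu Iv h). - subst; lra. Qed.

Lemma fix_below I f y z : contr I f -> I y -> f y = y -> I z -> z < y -> z < f z /\ f z < y.
Proof. intros H Iy Fy Iz Hz. destruct (H z y Iz Iy Hz). lra. Qed.

Lemma fix_above I f y z : contr I f -> I y -> f y = y -> I z -> y < z -> y < f z /\ f z < z.
Proof. intros H Iy Fy Iz Hz. destruct (H y z Iy Iz Hz). lra. Qed.

Lemma min_exists : forall (P : nat -> bool) n, P n = true ->
  exists k, P k = true /\ (forall i, (i < k)%nat -> P i = false).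
Proof.
  intros P n; induction n as [n IH] using lt_wf_ind. intros Hn.
  destruct (classic (exists i, (i < n)%nat /\ P i = true)) as [[i [Hi Pi]]|H].
  - apply (IH i Hi Pi).
  - exists n; split; auto. intros i Hi. destruct (P i) eqn:E; auto.
    exfalso; apply H; eauto.
Qed.

Lemma factor_nth c1 c2 l : factor [c1; c2] l ->
  exists j, (S j < length l)%nat /\ nth j l false = c1 /\ nth (S j) l false = c2.
Proof.
  intros [A [B ->]]. induction A as [|h A IH]; simpl.
  - exists 0%nat; simpl; repeat split; auto; lia.
  - destruct IH as [j [H1 [H2 H3]]]. simpl in *. exists (S j). simpl. split; [lia|split; assumption].
Qed.

Lemma factor_len c1 c2 l : factor [c1; c2] l -> (2 <= length l)%nat.
Proof. intros H; destruct (factor_nth _ _ _ H) as [j [H1 _]]; lia. Qed.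

Lemma skipn_nth (l : list bool) m : (m < length l)%nat ->
  skipn m l = nth m l false :: skipn (S m) l.
Proof.
  revert m; induction l as [|h l IH]; intros m Hm; simpl in *; [lia|].
  destruct m; simpl; auto. apply IH; lia.
Qed.

Lemma skip_run (l : list bool) c : forall k m, (m + k <= length l)%nat ->
  (forall j, (j < k)%nat -> nth (m + j) l false = c) ->
  skipn m l = repeat c k ++ skipn (m + k) l.
Proof.
  induction k as [|k IH]; intros m Hm Hc.
  - simpl; rewrite Nat.add_0_r; auto.
  - rewrite skipn_nth by lia. change (repeat c (S k) ++ ?Y) with (c :: (repeat c k ++ Y)).
    rewrite <- (Nat.add_0_r m) at 1. rewrite Hc by lia. f_equal.
    rewrite (IH (S m)).
    + f_equal. f_equal. lia.
    + lia.
    + intros j Hj; replace (S m + j)%nat with (m + S j)%nat by lia; apply Hc; lia.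
Qed.

Lemma L_comb (n : nat) (l : list bool) :
  (forall m, (m < length l)%nat -> (m = 0%nat \/ nth (m - 1) l false = true) ->
     exists k, (k = n \/ k = S n) /\ (m + k < length l)%nat /\
       (forall j, (j < k)%nat -> nth (m + j) l false = false) /\ nth (m + k) l false = true) ->
  forall m, (m <= length l)%nat -> (m = 0%nat \/ nth (m - 1) l false = true) ->
    exists w, skipn m l = Lmorph n w.
Proof.
  intros H t. induction t as [t IH] using (well_founded_induction
    (Wf_nat.well_founded_ltof _ (fun t => length l - t)%nat)).
  intros Ht Hs. destruct (Nat.eq_dec t (length l)) as [E|E].
  - exists []. subst; rewrite skipn_all; reflexivity.
  - destruct (H t ltac:(lia) Hs) as [k [Hk [Hb [Hz Ho]]]].
    destruct (IH (S (t + k))) as [w' Hw'].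
    + unfold Wf_nat.ltof; lia.
    + lia.
    + right; replace (S (t + k) - 1)%nat with (t + k)%nat by lia; auto.
    + exists ((if Nat.eqb k n then true else false) :: w').
      rewrite (skip_run l false k t) by (auto; lia).
      rewrite skipn_nth by lia. rewrite Ho. rewrite Hw'.
      unfold Lmorph; simpl. fold (Lmorph n w').
      destruct Hk as [->| ->].
      * rewrite Nat.eqb_refl; simpl. rewrite <- app_assoc; reflexivity.
      * replace (Nat.eqb (S n) n) with false by (symmetry; apply Nat.eqb_neq; lia).
        simpl. rewrite <- app_assoc; reflexivity.
Qed.

Lemma R_comb (n : nat) (l : list bool) :
  (forall m, (m < length l)%nat -> nth m l false = false ->
     exists k, (k = n \/ k = S n) /\ (m + 1 + k <= length l)%nat /\
       (forall j, (j < k)%nat -> nth (m + 1 + j) l false = true) /\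
       ((m + 1 + k)%nat = length l \/ nth (m + 1 + k) l false = false)) ->
  forall m, (m <= length l)%nat -> (m = length l :> nat \/ nth m l false = false) ->
    exists w, skipn m l = Rmorph n w.
Proof.
  intros H t. induction t as [t IH] using (well_founded_induction
    (Wf_nat.well_founded_ltof _ (fun t => length l - t)%nat)).
  intros Ht Hs. destruct (Nat.eq_dec t (length l)) as [E|E].
  - exists []. subst; rewrite skipn_all; reflexivity.
  - assert (Hf : nth t l false = false) by (destruct Hs; [lia|auto]).
    destruct (H t ltac:(lia) Hf) as [k [Hk [Hb [Ho Hz]]]].
    destruct (IH (t + 1 + k)%nat) as [w' Hw'].
    + unfold Wf_nat.ltof; lia.
    + lia.
    + auto.
    + exists ((if Nat.eqb k n then false else true) :: w').
      rewrite skipn_nth by lia. rewrite Hf.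
      replace (S t) with (t + 1)%nat by lia.
      rewrite (skip_run l true k (t + 1)) by (auto; lia).
      rewrite Hw'.
      unfold Rmorph; simpl. fold (Rmorph n w').
      destruct Hk as [->| ->].
      * rewrite Nat.eqb_refl; simpl. reflexivity.
      * replace (Nat.eqb (S n) n) with false by (symmetry; apply Nat.eqb_neq; lia).
        simpl. reflexivity.
Qed.

Definition dec (x z : R) : bool := if Rle_dec x z then true else false.

Lemma orbit_S' phi0 phi1 x m : orbit phi0 phi1 x (S m) =
  phi_of phi0 phi1 (dec x (orbit phi0 phi1 x m)) (orbit phi0 phi1 x m).
Proof. unfold dec, phi_of; simpl; destruct Rle_dec; reflexivity. Qed.

Lemma dec_true x z : dec x z = true -> x <= z.
Proof. unfold dec; destruct Rle_dec; congruence. Qed.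
Lemma dec_false x z : dec x z = false -> z < x.
Proof. unfold dec; destruct Rle_dec; [congruence|]; intros; lra. Qed.
Lemma dec_t x z : x <= z -> dec x z = true.
Proof. unfold dec; destruct Rle_dec; auto; intros; lra. Qed.
Lemma dec_f x z : z < x -> dec x z = false.
Proof. unfold dec; destruct Rle_dec; auto; intros; lra. Qed.

Lemma gen_const phi0 phi1 x c :
  (forall m, orbit phi0 phi1 x (S m) = phi_of phi0 phi1 c (orbit phi0 phi1 x m)) ->
  generates phi0 phi1 x [c].
Proof.
  intros H k Hk. destruct k; [lia|]. unfold omega_letter. simpl length.
  rewrite Nat.mod_1_r. simpl nth. replace (S k - 1)%nat with k by lia. apply H.
Qed.

Lemma gen_letters phi0 phi1 x pi : generates phi0 phi1 x pi ->
  forall m, orbit phi0 phi1 x (S m) =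
    phi_of phi0 phi1 (nth (m mod length pi) pi false) (orbit phi0 phi1 x m).
Proof.
  intros H m. rewrite (H (S m)) by lia. unfold omega_letter.
  replace (S m - 1)%nat with m by lia. reflexivity.
Qed.

Theorem mainTheorem7 (I : R -> Prop) (phi0 phi1 : R -> R) (x : R) (pi : word) :
  is_interval I -> A2 I phi0 phi1 -> I x ->
  is_threshold_word phi0 phi1 x pi ->
  (factor [false; false] pi -> exists (w : word) (n : nat), (1 <= n)%nat /\ pi = Lmorph n w) /\
  (factor [true; true] pi -> exists (w : word) (n : nat), (1 <= n)%nat /\ pi = Rmorph n w).
Proof.
  intros HI [HphiI [Hmon [y0 [y1 [Iy0 [Iy1 [F0 [F1 Hy]]]]]]]] Ix [Hne [Hgen Hmin]].
  assert (M0 : contr I phi0) by (intros u v; apply (Hmon false)).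
  assert (M1 : contr I phi1) by (intros u v; apply (Hmon true)).
  assert (I0 : forall z, I z -> I (phi0 z)) by (intros z; apply (HphiI false)).
  assert (I1 : forall z, I z -> I (phi1 z)) by (intros z; apply (HphiI true)).
  assert (oS := orbit_S' phi0 phi1 x).
  assert (GL := gen_letters phi0 phi1 x pi Hgen).
  assert (oI : forall m, I (orbit phi0 phi1 x m)).
  { induction m. simpl; auto. rewrite oS. unfold phi_of; destruct dec; auto. }
  set (o := orbit phi0 phi1 x) in *.
  set (p := length pi) in *.
  assert (Hp : (1 <= p)%nat) by (destruct pi; [congruence| subst p; simpl; lia]).
  destruct (Rle_lt_dec x y1) as [Hxy1|Hx1].
  {
    assert (inv : forall z, I z -> x <= z <= y1 -> x <= phi1 z <= y1).
    { intros z Iz Hz. destruct (Rle_lt_or_eq_dec z y1) as [h|h]; [lra| |].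
      - destruct (fix_below _ _ _ _ M1 Iy1 F1 Iz h); lra.
      - subst; lra. }
    assert (Ho : forall m, x <= o m <= y1).
    { induction m. apply inv; auto; lra. rewrite oS.
      rewrite dec_t by lra. apply inv; auto. }
    assert (Hg : generates phi0 phi1 x [true]).
    { apply gen_const. intros m. fold o. rewrite oS. rewrite dec_t; auto. apply Ho. }
    specialize (Hmin [true] ltac:(congruence) Hg). simpl in Hmin.
    split; intro Hf; apply factor_len in Hf; fold p in Hf; lia. }
  destruct (Rle_lt_dec y0 x) as [Hy0x|Hx0].
  {
    assert (inv : forall z, I z -> z < x -> phi0 z < x).
    { intros z Iz Hz. destruct (Rtotal_order z y0) as [h|[h|h]].
      - destruct (fix_below _ _ _ _ M0 Iy0 F0 Iz h); lra.
      - subst; lra.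
      - destruct (fix_above _ _ _ _ M0 Iy0 F0 Iz h); lra. }
    assert (Ho : forall m, o m < x).
    { induction m. change (o 0%nat) with (phi1 x). destruct (fix_above _ _ _ _ M1 Iy1 F1 Ix Hx1); lra.
      rewrite oS. rewrite dec_f by auto. apply inv; auto. }
    assert (Hg : generates phi0 phi1 x [false]).
    { apply gen_const. intros m. fold o. rewrite oS. rewrite dec_f; auto. }
    specialize (Hmin [false] ltac:(congruence) Hg). simpl in Hmin.
    split; intro Hf; apply factor_len in Hf; fold p in Hf; lia. }
  destruct (fix_above _ _ _ _ M1 Iy1 F1 Ix Hx1) as [Ha1 Ha2].
  destruct (fix_below _ _ _ _ M0 Iy0 F0 Ix Hx0) as [Hb1 Hb2].
  set (a := phi1 x) in Ha1, Ha2 |- *. set (b := phi0 x) in Hb1, Hb2 |- *.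
  assert (Ia : I a) by (apply I1; auto).
  assert (Ib : I b) by (apply I0; auto).
  assert (Hgap : phi1 b < phi0 a).
  { destruct (M1 x b Ix Ib Hb1) as [h1 h2]. destruct (M0 a x Ia Ix Ha2) as [h3 h4]. change (phi1 x) with a in h2. change (phi0 x) with b in h4. lra. }
  pose (D := fun m => dec x (o m)).
  assert (DT : forall m, D m = true -> o (S m) = phi1 (o m)).
  { intros m H. rewrite oS. fold (D m). rewrite H. reflexivity. }
  assert (DF : forall m, D m = false -> o (S m) = phi0 (o m)).
  { intros m H. rewrite oS. fold (D m). rewrite H. reflexivity. }
  assert (D_le : forall m, D m = true -> x <= o m) by (intros m; apply dec_true).
  assert (D_lt : forall m, D m = false -> o m < x) by (intros m; apply dec_false).
  assert (le_D : forall m, x <= o m -> D m = true) by (intros m; apply dec_t).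
  assert (lt_D : forall m, o m < x -> D m = false) by (intros m; apply dec_f).
  assert (o0 : o 0%nat = a) by reflexivity.
  assert (orng : forall m, a <= o m /\ o m < b).
  { induction m. rewrite o0; lra.
    destruct (D m) eqn:E.
    - rewrite (DT m E). split.
      + apply c_le with I; auto.
      + destruct (fix_above _ _ _ _ M1 Iy1 F1 (oI m) ltac:(lra)); lra.
    - rewrite (DF m E). split.
      + destruct (fix_below _ _ _ _ M0 Iy0 F0 (oI m) ltac:(lra)); lra.
      + apply c_lt with I; auto. }
  assert (D0 : D 0%nat = false) by (apply lt_D; rewrite o0; lra).
  assert (letters : forall m, nth (m mod p) pi false = D m).
  { intros m. specialize (GL m). fold o p in GL.
    destruct (orng m) as [h1 h2].
    destruct (fix_above _ _ _ _ M1 Iy1 F1 (oI m) ltac:(lra)).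
    destruct (fix_below _ _ _ _ M0 Iy0 F0 (oI m) ltac:(lra)).
    destruct (nth (m mod p) pi false) eqn:E1, (D m) eqn:E2; auto; exfalso.
    - rewrite (DF m E2) in GL. simpl in GL. lra.
    - rewrite (DT m E2) in GL. simpl in GL. lra. }
  assert (Dper : forall m, D (m + p)%nat = D m).
  { intros m. rewrite <- !letters. f_equal.
    replace (m + p)%nat with (m + 1 * p)%nat by lia. apply Nat.Div0.mod_add. }
  assert (Dnth : forall j, (j < p)%nat -> nth j pi false = D j).
  { intros j Hj. rewrite <- letters. rewrite Nat.mod_small; auto. }
  split.
  - intro Hf. assert (Hp2 := factor_len _ _ _ Hf). fold p in Hp2.
    destruct (factor_nth _ _ _ Hf) as [j [Hj [Hj1 Hj2]]]. fold p in Hj.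
    rewrite Dnth in Hj1, Hj2 by lia.
    assert (Hphi0a : phi0 a < x).
    { assert (h := D_lt _ Hj2). rewrite (DF j Hj1) in h.
      assert (phi0 a <= phi0 (o j)) by (apply c_le with I; auto; apply orng). lra. }
    assert (D1 : D 1%nat = false).
    { apply lt_D. rewrite (DF 0%nat D0). rewrite o0. auto. }
    assert (Ht : exists t, D t = true).
    { apply NNPP; intro Hno.
      assert (Hall : forall m, D m = false).
      { intros m. destruct (D m) eqn:E; auto. exfalso; apply Hno; eauto. }
      assert (Hg : generates phi0 phi1 x [false]).
      { apply gen_const. intros m. fold o. apply (DF m (Hall m)). }
      specialize (Hmin [false] ltac:(congruence) Hg). simpl in Hmin. lia. }
    destruct Ht as [t Ht]. destruct (min_exists D t Ht) as [r [Hr Hrmin]].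
    assert (Hr2 : (2 <= r)%nat).
    { destruct r as [|[|r]]; [congruence|congruence|lia]. }
    assert (Run : forall m, (m = 0%nat \/ D (m - 1)%nat = true) ->
      exists k, (k = r - 1 \/ k = r)%nat /\ (forall j, (j < k)%nat -> D (m + j)%nat = false)
        /\ D (m + k)%nat = true).
    { intros m Hm.
      assert (Hup0 : o m < phi1 b).
      { destruct Hm as [->|Hm].
        - rewrite o0. apply c_lt with I; auto.
        - destruct m as [|m']. { simpl in Hm. congruence. }
          replace (S m' - 1)%nat with m' in Hm by lia.
          rewrite (DT m' Hm). apply c_lt with I; auto. apply orng. }
      assert (Low : forall j, (forall i, (i < j)%nat -> D (m + i)%nat = false) ->
                (j <= r)%nat -> o j <= o (m + j)%nat).
      { clear j Hj Hj1 Hj2; intro j; induction j as [|j IH]; intros H Hjr.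
        - rewrite Nat.add_0_r, o0. apply orng.
        - rewrite (DF j (Hrmin j ltac:(lia))).
          replace (m + S j)%nat with (S (m + j)) by lia.
          rewrite (DF (m + j)%nat (H j ltac:(lia))).
          apply c_le with I; auto. apply IH; auto. lia. }
      assert (Up : forall j, (forall i, (i < j)%nat -> D (m + i)%nat = false) ->
                (j + 1 <= r)%nat -> o (m + j)%nat < o (S j)).
      { clear j Hj Hj1 Hj2; intro j; induction j as [|j IH]; intros H Hjr.
        - rewrite Nat.add_0_r. rewrite (DF 0%nat D0), o0. lra.
        - rewrite (DF (S j) (Hrmin (S j) ltac:(lia))).
          replace (m + S j)%nat with (S (m + j)) by lia.
          rewrite (DF (m + j)%nat (H j ltac:(lia))).
          apply c_lt with I; auto. apply IH; auto. lia. }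
      assert (Ek : exists k, D (m + k)%nat = true).
      { apply NNPP; intro Hn.
        assert (Hall : forall i, D (m + i)%nat = false).
        { intros i. destruct (D (m + i)%nat) eqn:E; auto. exfalso; apply Hn; eauto. }
        assert (h := Low r (fun i _ => Hall i) (le_n r)).
        assert (h2 := D_le _ Hr).
        specialize (Hall r). rewrite (le_D (m + r)%nat ltac:(lra)) in Hall.
        congruence. }
      destruct Ek as [k0 Hk0].
      destruct (min_exists (fun k => D (m + k)%nat) k0 Hk0) as [k [Hk Hkmin]].
      simpl in Hk, Hkmin.
      exists k. split; [|split; auto].
      assert (Hkr : (k <= r)%nat).
      { destruct (le_lt_dec k r) as [h|h]; auto. exfalso.
        assert (h1 := Low r (fun i hi => Hkmin i ltac:(lia)) (le_n r)).
        assert (h2 := D_le _ Hr).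
        assert (h3 := Hkmin r h). assert (h4 := D_lt _ h3). lra. }
      assert (Hkr2 : (r - 1 <= k)%nat).
      { destruct (le_lt_dec (r - 1) k) as [h|h]; auto. exfalso.
        assert (h1 := Up k Hkmin ltac:(lia)).
        assert (h2 := D_lt _ (Hrmin (S k) ltac:(lia))).
        assert (h3 := D_le _ Hk). lra. }
      lia. }
    assert (Dlast : D (p - 1)%nat = true).
    { destruct (D (p - 1)%nat) eqn:E; auto. exfalso.
      assert (C : forall q, D q = false -> exists s, (s <= q)%nat /\
                (s = 0%nat \/ D (s - 1)%nat = true) /\
                forall i, (s <= i <= q)%nat -> D i = false).
      { induction q as [|q IH]; intros Hq.
        - exists 0%nat; split; [lia|split; auto]. intros i Hi.
          replace i with 0%nat by lia; auto.
        - destruct (D q) eqn:Eq.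
          + exists (S q). split; [lia|split].
            * right; replace (S q - 1)%nat with q by lia; auto.
            * intros i Hi; replace i with (S q) by lia; auto.
          + destruct (IH eq_refl) as [s [Hs1 [Hs2 Hs3]]].
            exists s; split; [lia|split; auto]. intros i Hi.
            destruct (Nat.eq_dec i (S q)) as [->|hne]; auto. apply Hs3; lia. }
      destruct (C (p - 1)%nat E) as [s [Hs1 [Hs2 Hs3]]].
      destruct (Run s Hs2) as [k [Hk [Hkz Hkt]]].
      assert (Hsk : (p <= s + k)%nat).
      { destruct (le_lt_dec p (s + k)) as [h|h]; auto.
        rewrite Hs3 in Hkt by lia. congruence. }
      replace (s + k)%nat with ((s + k - p) + p)%nat in Hkt by lia.
      rewrite Dper in Hkt. rewrite Hrmin in Hkt by lia. congruence. }
    assert (Hc := L_comb (r - 1) pi).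
    destruct (Hc) with (m := 0%nat) as [w Hw]; [ | lia | left; reflexivity | ].
    + intros m Hm Hs. fold p in Hm |- *.
      assert (Hs' : m = 0%nat \/ D (m - 1)%nat = true).
      { destruct Hs as [Hs|Hs]; auto. right. rewrite <- Dnth by lia. auto. }
      destruct (Run m Hs') as [k [Hk [Hkz Hkt]]].
      assert (Hmk : (m + k < p)%nat).
      { destruct (le_lt_dec p (m + k)) as [h|h]; auto. exfalso.
        assert (h2 := Hkz (p - 1 - m)%nat ltac:(lia)).
        replace (m + (p - 1 - m))%nat with (p - 1)%nat in h2 by lia. congruence. }
      exists k. split; [lia|split; [auto|split]].
      * intros j0 Hj0. rewrite Dnth by lia. auto.
      * rewrite Dnth by lia. auto.
    + exists w, (r - 1)%nat. split; [lia|]. simpl in Hw. auto.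
  - intro Hf. assert (Hp2 := factor_len _ _ _ Hf). fold p in Hp2.
    destruct (factor_nth _ _ _ Hf) as [j [Hj [Hj1 Hj2]]]. fold p in Hj.
    rewrite Dnth in Hj1, Hj2 by lia.
    assert (Hxb : x < phi1 b).
    { assert (h := D_le _ Hj2). rewrite (DT j Hj1) in h.
      assert (phi1 (o j) < phi1 b) by (apply c_lt with I; auto; apply orng). lra. }
    assert (No00 : forall m, D m = false -> D (S m) = true).
    { intros m Hm. apply le_D. rewrite (DF m Hm).
      assert (phi0 a <= phi0 (o m)) by (apply c_le with I; auto; apply orng). lra. }
    assert (D1 : D 1%nat = true) by (apply No00; auto).
    assert (Dp : D p = false) by (assert (h := Dper 0%nat); simpl in h; congruence).
    destruct (min_exists (fun i => negb (D (1 + i)%nat)) (p - 1)%nat) as [r [Hr Hrmin]].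
    { replace (1 + (p - 1))%nat with p by lia. rewrite Dp. reflexivity. }
    simpl in Hr, Hrmin.
    assert (Hr' : D (S r) = false) by (destruct (D (S r)); auto; discriminate).
    assert (Hrmin' : forall i, (i < r)%nat -> D (S i) = true).
    { intros i hi. specialize (Hrmin i hi). destruct (D (S i)); auto; discriminate. }
    clear Hr Hrmin.
    assert (Hr1 : (1 <= r)%nat) by (destruct r; [congruence|lia]).
    assert (Run : forall m, D m = false ->
      exists k, (k = r \/ k = S r)%nat /\ (forall j, (j < k)%nat -> D (m + 1 + j)%nat = true)
        /\ D (m + 1 + k)%nat = false).
    { intros m Hm.
      assert (Hm1 : o 1%nat <= o (m + 1)%nat).
      { replace (m + 1)%nat with (S m) by lia. rewrite (DF m Hm), (DF 0%nat D0), o0.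
        apply c_le with I; auto; apply orng. }
      assert (Low : forall j, (forall i, (i < j)%nat -> D (m + 1 + i)%nat = true) ->
                (j <= r)%nat -> o (S j) <= o (m + 1 + j)%nat).
      { clear j Hj Hj1 Hj2; intro j; induction j as [|j IH]; intros H Hjr.
        - rewrite Nat.add_0_r. auto.
        - rewrite (DT (S j) (Hrmin' j ltac:(lia))).
          replace (m + 1 + S j)%nat with (S (m + 1 + j)) by lia.
          rewrite (DT (m + 1 + j)%nat (H j ltac:(lia))).
          apply c_le with I; auto. apply IH; auto. lia. }
      assert (Up : forall j, (forall i, (i < S j)%nat -> D (m + 1 + i)%nat = true) ->
                (j <= r)%nat -> o (m + 1 + S j)%nat < o (S j)).
      { clear j Hj Hj1 Hj2; intro j; induction j as [|j IH]; intros H Hjr.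
        - replace (m + 1 + 1)%nat with (S (m + 1 + 0)) by lia.
          rewrite (DT (m + 1 + 0)%nat (H 0%nat ltac:(lia))).
          rewrite (DF 0%nat D0), o0.
          assert (phi1 (o (m + 1 + 0)%nat) < phi1 b) by (apply c_lt with I; auto; apply orng).
          lra.
        - rewrite (DT (S j) (Hrmin' j ltac:(lia))).
          replace (m + 1 + S (S j))%nat with (S (m + 1 + S j)) by lia.
          rewrite (DT (m + 1 + S j)%nat (H (S j) ltac:(lia))).
          apply c_lt with I; auto. apply IH; auto. lia. }
      assert (Ek : exists k, negb (D (m + 1 + k)%nat) = true).
      { apply NNPP; intro Hn.
        assert (Hall : forall i, D (m + 1 + i)%nat = true).
        { intros i. destruct (D (m + 1 + i)%nat) eqn:E; auto. exfalso; apply Hn.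
          exists i. rewrite E. reflexivity. }
        assert (h := Up r (fun i _ => Hall i) (le_n r)).
        assert (h2 := D_lt _ Hr').
        assert (h3 := D_le _ (Hall (S r))). lra. }
      destruct Ek as [k0 Hk0].
      destruct (min_exists (fun k => negb (D (m + 1 + k)%nat)) k0 Hk0) as [k [Hk Hkmin]].
      simpl in Hk, Hkmin.
      assert (Hk' : D (m + 1 + k)%nat = false) by (destruct (D (m + 1 + k)%nat); auto; discriminate).
      assert (Hkmin' : forall i, (i < k)%nat -> D (m + 1 + i)%nat = true).
      { intros i hi. specialize (Hkmin i hi). destruct (D (m + 1 + i)%nat); auto; discriminate. }
      exists k. split; [|split; auto].
      assert (Hkr : (k <= S r)%nat).
      { destruct (le_lt_dec k (S r)) as [h|h]; auto. exfalso.
        assert (h1 := Up r (fun i hi => Hkmin' i ltac:(lia)) (le_n r)).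
        assert (h2 := D_lt _ Hr').
        assert (h3 := D_le _ (Hkmin' (S r) h)). lra. }
      assert (Hkr2 : (r <= k)%nat).
      { destruct (le_lt_dec r k) as [h|h]; auto. exfalso.
        assert (h1 := Low k Hkmin' ltac:(lia)).
        assert (h2 := D_le _ (Hrmin' k h)).
        assert (h3 := D_lt _ Hk'). lra. }
      lia. }
    assert (Hc := R_comb r pi).
    destruct (Hc) with (m := 0%nat) as [w Hw]; [ | lia | right | ].
    + intros m Hm Hs. fold p in Hm |- *.
      rewrite Dnth in Hs by lia.
      destruct (Run m Hs) as [k [Hk [Hkz Hkt]]].
      assert (Hmk : (m + 1 + k <= p)%nat).
      { destruct (le_lt_dec (m + 1 + k) p) as [h|h]; auto. exfalso.
        assert (h2 := Hkz (p - m - 1)%nat ltac:(lia)).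
        replace (m + 1 + (p - m - 1))%nat with p in h2 by lia. congruence. }
      exists k. split; [lia|split; [auto|split]].
      * intros j0 Hj0. rewrite Dnth by lia. auto.
      * destruct (Nat.eq_dec (m + 1 + k) p) as [h|h]; [left; auto|right].
        rewrite Dnth by lia. auto.
    + rewrite Dnth by lia. auto.
    + exists w, r. split; [lia|]. simpl in Hw. auto.
Qed.
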